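(* Let $L \subset \mathbb{P}^r$ be a line, $H \subset \mathbb{P}^r$ a hyperplane transverse to $L$, and $R \subset H$ a rational normal curve (of degree $r-1$ in $H$). Let $V \subset H^0(\mathcal{I}_{L\cup R}(2))$ be a nonzero linear series of quadrics containing $L \cup R$. Assume (a) no element of $V$ is a reducible quadric containing $H$, and (b) a general element $Q_{\mathrm{gen}}$ of $V$ satisfies $L \not\subset \mathrm{Sing}\, Q_{\mathrm{gen}}$. Then for general choices of $p \in L$ and $q \in R$, letting $L_{\mathrm{gen}} := \overline{pq}$ be the line through them: (i) $L_{\mathrm{gen}}$ is not contained in $Q_{\mathrm{gen}}$; (ii) among the quadrics $Q \in V$ containing $L_{\mathrm{gen}}$, a general one does not contain $L_{\mathrm{gen}}$ in its singular locus.
   Context: Work over an algebraically closed field of characteristic $0$. $\mathcal{I}_{L\cup R}$ denotes the ideal sheaf of $L \cup R$ in $\mathbb{P}^r$; elements of $H^0(\mathcal{I}_{L\cup R}(2))$ are identified (up to scalar) with quadric hypersurfaces containing $L\cup R$. *)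

(* Defs.v *)
From HB Require Import structures.
From mathcomp Require Import all_boot all_order all_algebra.
From mathcomp Require Import mpoly.
Set Implicit Arguments. Unset Strict Implicit. Unset Printing Implicit Defensive.
Import Order.TTheory GRing.Theory.
Local Open Scope ring_scope.

(* Conventions: P^r = projectivisation of k^(r+1); points are represented by
   (nonzero) row vectors 'rV[k]_(r.+1); quadrics are homogeneous degree-2
   polynomials in r+1 variables (elements of {mpoly k[r.+1]}).            *)

Section Defs.
Variable k : fieldType.

Definition pt n (x : 'rV[k]_n) : 'I_n -> k := fun i => x ord0 i.
Definition ev n (Q : {mpoly k[n]}) (x : 'rV[k]_n) : k := Q.@[pt x].

Definition contains_line n (Q : {mpoly k[n]}) (u v : 'rV[k]_n) :=
  forall a b : k, ev Q (a *: u + b *: v) = 0.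

Definition sing_contains_line n (Q : {mpoly k[n]}) (u v : 'rV[k]_n) :=
  forall (a b : k) (i : 'I_n), ev (Q^`M(i)) (a *: u + b *: v) = 0.

Definition inH n (h x : 'rV[k]_n) : bool := x *m h^T == 0.

(* rational normal curve of degree r-1 in H, parametrised by P^1:
   [s:t] |-> sum_{i<r} s^(r-1-i) t^i w_i, (w_i) a basis of H *)
Definition rnc_pt r (w : 'I_r -> 'rV[k]_(r.+1)) (s t : k) : 'rV[k]_(r.+1) :=
  \sum_(i < r) (s ^+ (r.-1 - i) * t ^+ i) *: w i.

Definition reducible_containing_H n (h : 'rV[k]_n) (Q : {mpoly k[n]}) :=
  (exists l1 l2 : {mpoly k[n]},
      l1 \is 1.-homog /\ l2 \is 1.-homog /\ Q = l1 * l2)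
  /\ (forall x, inH h x -> ev Q x = 0).

Definition qV n d (B : 'I_d -> {mpoly k[n]}) (c : 'I_d -> k) : {mpoly k[n]} :=
  \sum_(i < d) c i *: B i.

(* "a general (nonzero) element c of the linear subspace W of k^m satisfies P":
   there is a polynomial f not vanishing identically on W such that every
   nonzero c in W with f(c) <> 0 satisfies P.  (W is irreducible, so this is
   "P holds on a nonempty Zariski open subset of P(W)".) *)
Definition generic_in m (W : ('I_m -> k) -> Prop) (P : ('I_m -> k) -> Prop) :=
  exists f : {mpoly k[m]},
    (exists c, W c /\ f.@[c] != 0) /\
    (forall c, W c -> (exists i, c i != 0) -> f.@[c] != 0 -> P c).

(* parameters e = (a, b, s, t) in k^4 for p = a u + b v in L and
   q = gamma(s, t) in R *)
Definition p_of n (u v : 'rV[k]_n) (e : 'I_4 -> k) : 'rV[k]_n :=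
  e (inord 0) *: u + e (inord 1) *: v.
Definition q_of r (w : 'I_r -> 'rV[k]_(r.+1)) (e : 'I_4 -> k) :=
  rnc_pt w (e (inord 2)) (e (inord 3)).

End Defs.

(* Main.v *)
Require Import Defs.
From HB Require Import structures.
From mathcomp Require Import all_boot all_order all_algebra.
From mathcomp Require Import mpoly.
From mathcomp Require Import ring.
From Stdlib Require Import Classical.
Set Implicit Arguments. Unset Strict Implicit. Unset Printing Implicit Defensive.
Import GRing.Theory.
Local Open Scope ring_scope.

Section H.
Variable k : fieldType.

Lemma homog_ind (n d : nat) (P : {mpoly k[n]} -> Prop) :
  P 0 -> (forall p q, P p -> P q -> P (p + q)) ->
  (forall c p, P p -> P (c *: p)) ->
  (forall m, mdeg m = d -> P 'X_[m]) -> forall Q, Q \is d.-homog -> P Q.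
Proof.
move=> P0 PD PZ PX Q /dhomogP hQ; rewrite (mpolyE Q) big_seq.
apply: (big_ind P) => // m /hQ hm; apply: PZ; exact: PX.
Qed.

Lemma mdeg2P n (m : 'X_{1..n}) : mdeg m = 2%N ->
  exists i j, m = (U_(i) + U_(j))%MM.
Proof.
move=> hm.
have [i hi] : exists i, (0 < m i)%N.
  apply/existsP; apply: contraT; rewrite negb_exists => /forallP h0.
  move: hm; rewrite mdegE big1 // => i _.
  by move: (h0 i); rewrite lt0n negbK => /eqP.
have le : (U_(i) <= m)%MM.
  apply/mnm_lepP => l; rewrite mnm1E; case: eqP => [<-//|]; by [].
have h1 : mdeg (m - U_(i))%MM = 1%N.
  move: hm; rewrite -{1}(submK le) mdegD mdeg1 addn1; by case.
move/eqP/mdeg1P: h1 => [j /eqP hj]; exists j, i.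
by rewrite -hj submK.
Qed.

Lemma sum_delta n (i : 'I_n) (F : 'I_n -> k) :
  \sum_j (i == j)%:R * F j = F i.
Proof.
rewrite (bigD1 i) //= eqxx mul1r big1 ?addr0 // => j hj.
by rewrite eq_sym (negbTE hj) mul0r.
Qed.

Lemma lin1 n (P : {mpoly k[n]}) : P \is 1.-homog ->
  forall v, P.@[v] = \sum_j v j * P@_U_(j).
Proof.
move: P; apply: homog_ind.
- by move=> v; rewrite meval0 big1 // => j _; rewrite mcoeff0 mulr0.
- move=> p q hp hq v; rewrite mevalD hp hq -big_split /=.
  by apply: eq_bigr => j _; rewrite mcoeffD mulrDr.
- move=> c p hp v; rewrite mevalZ hp mulr_sumr; apply: eq_bigr => j _.
  by rewrite mcoeffZ mulrCA.
- move=> m /eqP/mdeg1P [i /eqP ->] v; rewrite mevalXU.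
  rewrite -[LHS](sum_delta i v); apply: eq_bigr => j _.
  by rewrite mcoeffX eq_mnm1 mulrC.
Qed.

Lemma mderivXU n (i l : 'I_n) : ('X_i : {mpoly k[n]})^`M(l) = (i == l)%:R%:MP.
Proof.
rewrite mderivX mnm1E; case: eqP => [<-|_].
  have -> : (U_(i) - U_(i) = 0)%MM by apply/mnmP=> j; rewrite mnmBE subnn mnm0E.
  by rewrite mpolyX0 scale1r.
by rewrite scale0r.
Qed.


Lemma mderiv_homog n (Q : {mpoly k[n]}) l : Q \is 2.-homog -> Q^`M(l) \is 1.-homog.
Proof.
move: Q; apply: homog_ind.
- by rewrite mderiv0 dhomog0.
- by move=> p q hp hq; rewrite mderivD dhomogD.
- by move=> c p hp; rewrite mderivZ dhomogZ.
- move=> m hm; rewrite mderivX; case: (posnP (m l)) => [->|hl].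
    by rewrite scale0r dhomog0.
  apply: dhomogZ; rewrite dhomogX; apply/eqP.
  have le : (U_(l) <= m)%MM.
    apply/mnm_lepP => j; rewrite mnm1E; case: eqP => [<-//|]; by [].
  move: hm; rewrite -{1}(submK le) mdegD mdeg1 addn1; by case.
Qed.

Lemma B1 n (Q : {mpoly k[n]}) : Q \is 2.-homog -> forall x y,
  Q.@[fun i => x i + y i] = Q.@[x] + \sum_l (Q^`M(l)).@[x] * y l + Q.@[y].
Proof.
move: Q; apply: homog_ind.
- by move=> x y; rewrite !meval0 big1 ?addr0 // => l _; rewrite mderiv0 meval0 mul0r.
- move=> p q hp hq x y; rewrite !mevalD hp hq.
  under [X in _ = _ + X + _]eq_bigr do rewrite mderivD mevalD mulrDl.
  by rewrite big_split /=; ring.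
- move=> c p hp x y; rewrite !mevalZ hp.
  under [X in _ = _ + X + _]eq_bigr do rewrite mderivZ mevalZ -mulrA.
  by rewrite -mulr_sumr; ring.
- move=> m /mdeg2P [i [j ->]] x y; rewrite mpolyXD.
  under eq_bigr do rewrite mderivM !mderivXU.
  rewrite !mevalM !mevalXU.
  under eq_bigr do rewrite mevalD !mevalM !mevalXU !mevalC mulrDl.
  rewrite big_split /=.
  rewrite (eq_bigr (fun l => (i == l)%:R * (x j * y l))); last by move=> l _; ring.
  rewrite [X in _ = _ + (_ + X) + _](eq_bigr (fun l => (j == l)%:R * (x i * y l))); last by move=> l _; ring.
  rewrite !sum_delta; ring.
Qed.

Lemma B2 n (Q : {mpoly k[n]}) : Q \is 2.-homog -> forall a x,
  Q.@[fun i => a * x i] = a ^+ 2 * Q.@[x].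
Proof.
move: Q; apply: homog_ind.
- by move=> a x; rewrite !meval0 mulr0.
- by move=> p q hp hq a x; rewrite !mevalD hp hq mulrDr.
- by move=> c p hp a x; rewrite !mevalZ hp mulrCA.
- move=> m /mdeg2P [i [j ->]] a x; rewrite mpolyXD !mevalM !mevalXU; ring.
Qed.

Lemma U7 n (Q : {mpoly k[n]}) : [pchar k] =i pred0 -> Q \is 2.-homog ->
  (forall l j, (Q^`M(l))@_U_(j) = 0) -> Q = 0.
Proof.
move=> c0 hQ h; apply/eqP; rewrite -msupp_eq0.
case E: (msupp Q) => [//|m s]; exfalso.
have hm : m \in msupp Q by rewrite E mem_head.
have := dhomogP _ _ _ hQ m hm; move/mdeg2P => [i [j hij]].
move: (h j i); rewrite mcoeff_mderiv -hij.
move/eqP; rewrite -mulr_natr mulf_eq0 => /orP [|].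
  by rewrite mcoeff_eq0 hm.
by move/pcharf0P: c0 => ->.
Qed.


Lemma mpoly_uni N (f : {mpoly k[N]}) (P_ : 'I_N -> {poly k}) :
  exists P : {poly k}, forall t, P.[t] = f.@[fun j => (P_ j).[t]].
Proof.
elim/mpolyind: f => [|c m p _ _ [Pp hP]].
  by exists 0 => t; rewrite meval0 horner0.
exists (c%:P * \prod_j (P_ j) ^+ (m j) + Pp) => t.
rewrite hornerD hornerCM horner_prod mevalD mevalZ mevalX hP.
by congr (_ * _ + _); apply: eq_bigr => j _; rewrite horner_exp.
Qed.

Definition PF n (g : ('I_n -> k) -> k) :=
  exists f : {mpoly k[n]}, forall e, f.@[e] = g e.

Lemma PF_const n c : PF (fun _ : 'I_n -> k => c).
Proof. by exists c%:MP => e; rewrite mevalC. Qed.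

Lemma PF_coord n (i : 'I_n) : PF (fun e => e i).
Proof. by exists 'X_i => e; rewrite mevalXU. Qed.

Lemma PF_add n (g1 g2 : ('I_n -> k) -> k) : PF g1 -> PF g2 -> PF (fun e => g1 e + g2 e).
Proof. by move=> [f1 h1] [f2 h2]; exists (f1 + f2) => e; rewrite mevalD h1 h2. Qed.

Lemma PF_mul n (g1 g2 : ('I_n -> k) -> k) : PF g1 -> PF g2 -> PF (fun e => g1 e * g2 e).
Proof. by move=> [f1 h1] [f2 h2]; exists (f1 * f2) => e; rewrite mevalM h1 h2. Qed.

Lemma PF_opp n (g1 : ('I_n -> k) -> k) : PF g1 -> PF (fun e => - g1 e).
Proof. by move=> [f1 h1]; exists (- f1) => e; rewrite mevalN h1. Qed.

Lemma PF_sub n (g1 g2 : ('I_n -> k) -> k) : PF g1 -> PF g2 -> PF (fun e => g1 e - g2 e).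
Proof. by move=> h1 h2; apply: PF_add => //; apply: PF_opp. Qed.

Lemma PF_comp n N (Q : {mpoly k[N]}) (G : 'I_N -> ('I_n -> k) -> k) :
  (forall j, PF (G j)) -> PF (fun e => Q.@[fun j => G j e]).
Proof.
move=> hG; have [F hF] := fin_all_exists hG.
exists (Q \mPo [tuple F j | j < N]) => e; rewrite comp_mpoly_meval.
by apply: meval_eq => j; rewrite tnth_mktuple hF.
Qed.

Lemma PF_sum n m (G : 'I_m -> ('I_n -> k) -> k) :
  (forall j, PF (G j)) -> PF (fun e => \sum_j G j e).
Proof.
move=> hG; have [f hf] := PF_comp (\sum_(j < m) 'X_j) hG; exists f => e.
rewrite hf raddf_sum; apply: eq_bigr => j _; exact: mevalXU.
Qed.

Lemma PF_exp n (g : ('I_n -> k) -> k) i : PF g -> PF (fun e => g e ^+ i).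
Proof.
move=> [f hf]; exists (f ^+ i) => e; by rewrite rmorphXn /= hf.
Qed.

End H.

Section C.
Variable k : closedFieldType.

Lemma NV_mul n (g1 g2 : ('I_n -> k) -> k) : PF g1 -> PF g2 ->
  (exists e, g1 e != 0) -> (exists e, g2 e != 0) -> exists e, g1 e * g2 e != 0.
Proof.
move=> [f1 h1] [f2 h2] [e1 he1] [e2 he2].
pose P_ := fun i => (e1 i)%:P + 'X * (e2 i - e1 i)%:P.
have [P1 hP1] := mpoly_uni f1 P_.
have [P2 hP2] := mpoly_uni f2 P_.
have hP0 : forall t, (fun j => (P_ j).[t]) =1 (fun j => e1 j + t * (e2 j - e1 j)).
  by move=> t j; rewrite /P_ !hornerE.
have P1n : P1 != 0.
  apply: contra he1 => /eqP P0; rewrite -h1; move: (hP1 0); rewrite P0 horner0.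
  by move=> ->; rewrite (meval_eq _ (hP0 0)); apply/eqP; apply: meval_eq => j; rewrite mul0r addr0.
have P2n : P2 != 0.
  apply: contra he2 => /eqP P0; rewrite -h2; move: (hP2 1); rewrite P0 horner0.
  by move=> ->; rewrite (meval_eq _ (hP0 1)); apply/eqP; apply: meval_eq => j; rewrite mul1r addrC subrK.
have /closed_nonrootP [t ht] : P1 * P2 != 0 by rewrite mulf_neq0.
exists (fun j => (P_ j).[t]); rewrite -h1 -h2 -hP1 -hP2 -hornerM; exact: ht.
Qed.

End C.
Section LA.
Variable k : fieldType.

Lemma mx11_mul_eq0 (a c : 'M[k]_1) : a *m c = 0 -> c != 0 -> a = 0.
Proof.
move=> h hc; apply/matrixP => i j; rewrite !ord1 mxE.
have : (a *m c) 0 0 = 0 by rewrite h mxE.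
rewrite mxE big_ord1 => /eqP; rewrite mulf_eq0 => /orP [/eqP //|/eqP c0].
by case/eqP: hc; apply/matrixP => i' j'; rewrite !ord1 c0 mxE.
Qed.

Lemma row_free_stack m n (A : 'M[k]_(m, n)) (z h : 'rV[k]_n) :
  row_free A -> A *m h^T = 0 -> z *m h^T != 0 -> row_free (col_mx z A).
Proof.
move=> fA Ah zh; apply: inj_row_free => x.
rewrite -[x]hsubmxK mul_row_col => hx.
have h1 : lsubmx x *m (z *m h^T) = 0.
  have := congr1 (mulmx^~ h^T) hx; rewrite /= mulmxDl mul0mx -!mulmxA Ah mulmx0 addr0.
  by [].
have a0 := mx11_mul_eq0 h1 zh.
move: hx; rewrite a0 mul0mx add0r => hb.
have b0 : rsubmx x = 0 by apply: (row_free_inj fA); rewrite hb mul0mx.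
by rewrite b0 row_mx0.
Qed.


Lemma LA r (W : 'M[k]_(r, r.+1)) (h z : 'rV[k]_(r.+1)) (g : 'I_(r.+1) -> k) :
  row_free W -> W *m h^T = 0 -> z *m h^T != 0 ->
  (forall i, \sum_l W i l * g l = 0) -> \sum_l z 0 l * g l = 0 ->
  forall l, g l = 0.
Proof.
move=> fW Wh zh hW hz l.
have fM : row_free (col_mx z W) := row_free_stack fW Wh zh.
have uM : (col_mx z W : 'M_(r.+1)) \in unitmx by rewrite -row_free_unit.
pose G := \col_l g l.
have MG : col_mx z W *m G = 0.
  rewrite mul_col_mx; apply/matrixP => i j; rewrite mxE.
  case: splitP => i' _; rewrite !mxE.
    rewrite ord1 -[RHS]hz; apply: eq_bigr => l' _; by rewrite mxE.
  rewrite -[RHS](hW i'); apply: eq_bigr => l' _; by rewrite mxE.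
have : G = 0 by rewrite -(mulKmx uM G) MG mulmx0.
by move/matrixP/(_ l 0); rewrite !mxE.
Qed.

Lemma rank2 n (p q h : 'rV[k]_n) :
  p *m h^T != 0 -> q *m h^T = 0 -> q != 0 -> \rank (col_mx p q) = 2%N.
Proof.
move=> ph qh q0.
have fq : row_free q.
  rewrite /row_free eqn_leq rank_leq_row lt0n mxrank_eq0; exact: q0.
by apply/eqP; exact: (row_free_stack fq qh ph).
Qed.

End LA.

Section RV.
Variable k : fieldType.
Variable n : nat.
Implicit Types (Q : {mpoly k[n]}) (x y : 'rV[k]_n).

Definition beta Q x y := \sum_l ev (Q^`M(l)) x * y 0 l.

Lemma ev_add Q x y : Q \is 2.-homog -> ev Q (x + y) = ev Q x + beta Q x y + ev Q y.
Proof.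
move=> hQ; rewrite /ev -B1 //; apply: meval_eq => i; by rewrite /pt mxE.
Qed.

Lemma ev_scale Q a x : Q \is 2.-homog -> ev Q (a *: x) = a ^+ 2 * ev Q x.
Proof.
move=> hQ; rewrite /ev -B2 //; apply: meval_eq => i; by rewrite /pt mxE.
Qed.

Lemma dv_lin Q l x : Q \is 2.-homog ->
  ev (Q^`M(l)) x = \sum_j x 0 j * (Q^`M(l))@_U_(j).
Proof. by move=> hQ; rewrite /ev lin1 //; apply: mderiv_homog. Qed.

Lemma dv_add Q l x y : Q \is 2.-homog ->
  ev (Q^`M(l)) (x + y) = ev (Q^`M(l)) x + ev (Q^`M(l)) y.
Proof.
move=> hQ; rewrite !dv_lin // -big_split; apply: eq_bigr => j _.
by rewrite mxE mulrDl.
Qed.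

Lemma dv_scale Q l a x : Q \is 2.-homog ->
  ev (Q^`M(l)) (a *: x) = a * ev (Q^`M(l)) x.
Proof.
move=> hQ; rewrite !dv_lin // mulr_sumr; apply: eq_bigr => j _.
by rewrite mxE mulrA.
Qed.

Lemma dv_sum Q l m (c : 'I_m -> k) (z : 'I_m -> 'rV[k]_n) : Q \is 2.-homog ->
  ev (Q^`M(l)) (\sum_i c i *: z i) = \sum_i c i * ev (Q^`M(l)) (z i).
Proof.
move=> hQ; rewrite dv_lin //; under eq_bigr do rewrite summxE mulr_suml.
rewrite exchange_big /=; apply: eq_bigr => i _; rewrite dv_lin // mulr_sumr.
by apply: eq_bigr => j _; rewrite mxE mulrA.
Qed.

Lemma beta_scale_l Q a x y : Q \is 2.-homog -> beta Q (a *: x) y = a * beta Q x y.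
Proof.
move=> hQ; rewrite /beta mulr_sumr; apply: eq_bigr => l _; by rewrite dv_scale // mulrA.
Qed.

Lemma beta_scale_r Q a x y : beta Q x (a *: y) = a * beta Q x y.
Proof.
rewrite /beta mulr_sumr; apply: eq_bigr => l _; by rewrite mxE mulrCA.
Qed.

Lemma beta_sum_r Q x m (c : 'I_m -> k) (z : 'I_m -> 'rV[k]_n) :
  beta Q x (\sum_i c i *: z i) = \sum_i c i * beta Q x (z i).
Proof.
rewrite /beta; under eq_bigr do rewrite summxE mulr_sumr.
rewrite exchange_big /=; apply: eq_bigr => i _; rewrite mulr_sumr.
by apply: eq_bigr => l _; rewrite mxE; ring.
Qed.

Lemma ev_comb Q a b x y : Q \is 2.-homog ->
  ev Q (a *: x + b *: y) = a ^+ 2 * ev Q x + a * b * beta Q x y + b ^+ 2 * ev Q y.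
Proof.
move=> hQ; rewrite ev_add // !ev_scale // beta_scale_l // beta_scale_r; ring.
Qed.

Lemma CL1 Q x y : Q \is 2.-homog -> ev Q x = 0 -> ev Q y = 0 -> beta Q x y = 0 ->
  contains_line Q x y.
Proof. by move=> hQ h1 h2 h3 a b; rewrite ev_comb // h1 h2 h3; ring. Qed.

Lemma CL2 Q x y : Q \is 2.-homog -> contains_line Q x y -> beta Q x y = 0.
Proof.
move=> hQ hc; have := hc 1 1; rewrite !scale1r ev_add //.
have := hc 1 0; rewrite scale1r scale0r addr0 => ->.
have := hc 0 1; rewrite scale1r scale0r add0r => ->.
by rewrite add0r addr0.
Qed.

Lemma qV_homog d (B : 'I_d -> {mpoly k[n]}) c :
  (forall i, B i \is 2.-homog) -> qV B c \is 2.-homog.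
Proof.
move=> hB; rewrite /qV; apply: (big_ind (fun p => p \is 2.-homog)).
- exact: dhomog0.
- by move=> p q hp hq; rewrite dhomogD.
- by move=> i _; rewrite dhomogZ.
Qed.

Lemma qV_ev d (B : 'I_d -> {mpoly k[n]}) c x :
  ev (qV B c) x = \sum_i c i * ev (B i) x.
Proof. by rewrite /ev /qV raddf_sum; apply: eq_bigr => i _; exact: mevalZ. Qed.

Lemma qV_dv d (B : 'I_d -> {mpoly k[n]}) c l x :
  ev ((qV B c)^`M(l)) x = \sum_i c i * ev ((B i)^`M(l)) x.
Proof.
rewrite /ev /qV.
have -> : (\sum_(i < d) c i *: B i)^`M(l) = \sum_(i < d) c i *: (B i)^`M(l).
  by rewrite raddf_sum; apply: eq_bigr => i _; exact: mderivZ.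
by rewrite raddf_sum; apply: eq_bigr => i _; exact: mevalZ.
Qed.

Lemma qV_beta d (B : 'I_d -> {mpoly k[n]}) c x y :
  beta (qV B c) x y = \sum_i c i * beta (B i) x y.
Proof.
rewrite /beta; under eq_bigr do rewrite qV_dv mulr_suml.
rewrite exchange_big; apply: eq_bigr => i _; rewrite mulr_sumr.
by apply: eq_bigr => l _; rewrite mulrA.
Qed.

End RV.

Section Poly.
Variable k : closedFieldType.

Lemma poly0 r (a : 'I_r -> k) : (forall t : k, \sum_(i < r) t ^+ i * a i = 0) -> forall i, a i = 0.
Proof.
move=> h i; pose P : {poly k} := \sum_(j < r) (a j)%:P * 'X^j.
have hP : forall t, P.[t] = \sum_(j < r) t ^+ j * a j.
  move=> t; rewrite /P horner_sum; apply: eq_bigr => j _.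
  by rewrite hornerCM hornerXn mulrC.
have P0 : P = 0.
  apply/eqP; apply: contraT => /closed_nonrootP [t]; by rewrite /root hP h eqxx.
have : P`_i = 0 by rewrite P0 coef0.
rewrite /P coef_sum (bigD1 i) //= coefCM coefXn eqxx mulr1 big1 ?addr0 // => j hj.
by rewrite coefCM coefXn; case: eqP => [/val_inj hji|]; [rewrite hji eqxx in hj | rewrite mulr0].
Qed.

Lemma poly0_mul r (a b : 'I_r -> k) :
  (forall t : k, (\sum_(i < r) t ^+ i * a i) * (\sum_(i < r) t ^+ i * b i) = 0) ->
  (forall i, a i = 0) \/ (forall i, b i = 0).
Proof.
move=> h.
pose Pa : {poly k} := \sum_(j < r) (a j)%:P * 'X^j.
pose Pb : {poly k} := \sum_(j < r) (b j)%:P * 'X^j.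
have hP : forall (c : 'I_r -> k) t, (\sum_(j < r) (c j)%:P * 'X^j).[t] = \sum_(j < r) t ^+ j * c j.
  move=> c t; rewrite horner_sum; apply: eq_bigr => j _.
  by rewrite hornerCM hornerXn mulrC.
have : Pa * Pb = 0.
  apply/eqP; apply: contraT => /closed_nonrootP [t]; by rewrite /root hornerM !hP h eqxx.
move/eqP; rewrite mulf_eq0 => /orP [] /eqP H0; [left|right]; apply: poly0 => t.
  by rewrite -hP -/Pa H0 horner0.
by rewrite -hP -/Pb H0 horner0.
Qed.

End Poly.

Section Main.
Variable k : closedFieldType.
Hypothesis char0 : [pchar k] =i pred0.
Variable r : nat.
Hypothesis hr : (2 <= r)%N.
Variables u v h : 'rV[k]_(r.+1).
Hypothesis htr : ~~ (inH h u && inH h v).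
Variable w : 'I_r -> 'rV[k]_(r.+1).
Hypothesis hw : row_free (\matrix_(i < r) w i).
Hypothesis hwH : forall i, inH h (w i).
Variable d : nat.
Variable B : 'I_d -> {mpoly k[r.+1]}.
Hypothesis hd : (0 < d)%N.
Hypothesis hB2 : forall i, B i \is 2.-homog.
Hypothesis hBL : forall i, contains_line (B i) u v.
Hypothesis hBR : forall i (s t : k), ev (B i) (rnc_pt w s t) = 0.
Hypothesis hBfree : forall c : 'I_d -> k, qV B c = 0 -> forall i, c i = 0.
Hypothesis hb : generic_in (fun _ => True)
          (fun c : 'I_d -> k => ~ sing_contains_line (qV B c) u v).

Definition W := \matrix_(i < r) w i.
Definition P e := p_of u v e.
Definition Qe e := q_of w e.
Definition g i e := beta (B i) (P e) (Qe e).
Definition mk4 (a b s t : k) : 'I_4 -> k := fun i => nth 0 [:: a; b; s; t] i.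

Lemma P_mk4 a b s t : P (mk4 a b s t) = a *: u + b *: v.
Proof. by rewrite /P /p_of /mk4 !inordK. Qed.

Lemma Qe_mk4 a b s t : Qe (mk4 a b s t) = rnc_pt w s t.
Proof. by rewrite /Qe /q_of /mk4 !inordK. Qed.

Lemma rnc1 t : rnc_pt w 1 t = \sum_(i < r) t ^+ i *: w i.
Proof. by rewrite /rnc_pt; apply: eq_bigr => i _; rewrite expr1n mul1r. Qed.

Lemma whT i : w i *m h^T = 0.
Proof. by apply/eqP; exact: hwH. Qed.

Lemma Wh : W *m h^T = 0.
Proof. by apply/row_matrixP => i; rewrite row_mul rowK whT row0. Qed.

Lemma sumH m (c : 'I_m -> k) (z : 'I_m -> 'rV[k]_(r.+1)) :
  (forall i, z i *m h^T = 0) -> (\sum_i c i *: z i) *m h^T = 0.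
Proof.
move=> hz; rewrite mulmx_suml big1 // => i _; by rewrite -scalemxAl hz scaler0.
Qed.

Lemma QeH e : Qe e *m h^T = 0.
Proof. by apply: sumH => i; exact: whT. Qed.

Lemma Lvan c a b : ev (qV B c) (a *: u + b *: v) = 0.
Proof. by rewrite qV_ev big1 // => i _; rewrite hBL mulr0. Qed.

Lemma Rvan c s t : ev (qV B c) (rnc_pt w s t) = 0.
Proof. by rewrite qV_ev big1 // => i _; rewrite hBR mulr0. Qed.

Lemma claim1 : exists i0 e, g i0 e != 0.
Proof.
apply: NNPP => NE.
have NE' : forall i e, g i e = 0.
  move=> i e; apply/eqP; apply: contraT => hne; exfalso; apply: NE; by exists i, e.
case: hb => f [[c0 [_ hc0]] hP].
have [c hc] : exists c, f.@[c] * c (Ordinal hd) != 0.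
  apply: NV_mul.
  - by exists f.
  - exact: PF_coord.
  - by exists c0.
  - by exists (fun _ => 1); rewrite oner_neq0.
move: hc; rewrite mulf_eq0 negb_or => /andP [hfc hcd].
apply: (hP c I (ex_intro _ (Ordinal hd) hcd) hfc).
set Q := qV B c; have hQ : Q \is 2.-homog by apply: qV_homog.
move=> a b l.
set x := a *: u + b *: v.
have hbw : forall i, beta Q x (w i) = 0.
  apply: (@poly0 _ r (fun i => beta Q x (w i))) => t; rewrite -beta_sum_r -rnc1 /x.
  rewrite -(P_mk4 a b 1 t) -(Qe_mk4 a b 1 t) qV_beta big1 // => j _.
  by have := NE' j (mk4 a b 1 t); rewrite /g => ->; rewrite mulr0.
have hbz : forall z, (exists a' b', z = a' *: u + b' *: v) -> beta Q x z = 0.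
  move=> z [a' [b' ->]].
  have := ev_add x (a' *: u + b' *: v) hQ.
  have -> : x + (a' *: u + b' *: v) = (a + a') *: u + (b + b') *: v.
    by rewrite /x !scalerDl addrACA.
  by rewrite /Q /x !Lvan add0r addr0 => /esym.
have [z [hz1 hz2]] : exists z, (exists a' b', z = a' *: u + b' *: v) /\ z *m h^T != 0.
  case/nandP: htr => hu.
    exists u; split => //; exists 1, 0; by rewrite scale1r scale0r addr0.
  exists v; split => //; exists 0, 1; by rewrite scale1r scale0r add0r.
apply: (@LA k r W h z (fun l => ev (Q^`M(l)) x) hw Wh hz2 _ _ l).
  move=> i; rewrite -[RHS](hbw i) /beta; apply: eq_bigr => l' _; by rewrite mxE mulrC.
rewrite -[RHS](hbz z hz1) /beta; apply: eq_bigr => l' _; by rewrite mulrC.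
Qed.


Lemma PF_ext n (g1 g2 : ('I_n -> k) -> k) : (forall e, g1 e = g2 e) -> PF g1 -> PF g2.
Proof. by move=> he [f hf]; exists f => e; rewrite hf he. Qed.

Lemma PF_P l : PF (fun e => P e ord0 l).
Proof.
apply: (@PF_ext _ (fun e => e (inord 0) * u ord0 l + e (inord 1) * v ord0 l)).
  by move=> e; rewrite /P /p_of !mxE.
by apply: PF_add; apply: PF_mul; [apply: PF_coord | apply: PF_const | apply: PF_coord | apply: PF_const].
Qed.

Lemma PF_Qe l : PF (fun e => Qe e ord0 l).
Proof.
apply: (@PF_ext _ (fun e => \sum_(i < r) (e (inord 2) ^+ (r.-1 - i) * e (inord 3) ^+ i) * w i ord0 l)).
  by move=> e; rewrite /Qe /q_of /rnc_pt summxE; apply: eq_bigr => i _; rewrite mxE.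
apply: PF_sum => i; apply: PF_mul; last exact: PF_const.
by apply: PF_mul; apply: PF_exp; apply: PF_coord.
Qed.

Lemma PF_ev (X : ('I_4 -> k) -> 'rV[k]_(r.+1)) (Q : {mpoly k[r.+1]}) :
  (forall j, PF (fun e => X e ord0 j)) -> PF (fun e => ev Q (X e)).
Proof.
move=> hX; apply: (PF_ext _ (PF_comp Q hX)) => e.
by rewrite /ev; apply: meval_eq.
Qed.

Lemma PF_g i : PF (g i).
Proof.
apply: (PF_ext (g1 := fun e => \sum_l ev ((B i)^`M(l)) (P e) * Qe e ord0 l)) => //.
apply: PF_sum => l; apply: PF_mul; [apply: PF_ev; exact: PF_P | exact: PF_Qe].
Qed.

Definition F1 e := \sum_l P e ord0 l * h ord0 l.

Lemma PF_F1 : PF F1.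
Proof. apply: PF_sum => l; apply: PF_mul; [exact: PF_P | exact: PF_const]. Qed.

Lemma mx11_neq0 (A : 'M[k]_1) : A != 0 -> A 0 0 != 0.
Proof.
apply: contra => /eqP h0; apply/eqP/matrixP => i j; by rewrite !ord1 h0 mxE.
Qed.

Lemma F1_eq e : F1 e = (P e *m h^T) 0 0.
Proof. rewrite /F1 mxE; apply: eq_bigr => l _; by rewrite !mxE. Qed.

Lemma F1_P e : F1 e != 0 -> P e *m h^T != 0.
Proof. by rewrite F1_eq; apply: contra => /eqP ->; rewrite mxE. Qed.

Lemma NV_F1 : exists e, F1 e != 0.
Proof.
case/nandP: htr => hu.
  exists (mk4 1 0 0 0); rewrite F1_eq P_mk4 scale1r scale0r addr0; exact: mx11_neq0.
exists (mk4 0 1 0 0); rewrite F1_eq P_mk4 scale1r scale0r add0r; exact: mx11_neq0.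
Qed.

Definition Z (sel : bool) e := if sel then P e else Qe e.
Definition X i0 j sel m e :=
  g i0 e * ev ((B j)^`M(m)) (Z sel e) - g j e * ev ((B i0)^`M(m)) (Z sel e).

Lemma sum_delta2 (j i0 : 'I_d) (lam : k) (F : 'I_d -> k) :
  \sum_i ((i == j)%:R - lam * (i == i0)%:R) * F i = F j - lam * F i0.
Proof.
under eq_bigr => i _ do rewrite mulrBl -mulrA (eq_sym i).
rewrite sumrB sum_delta -mulr_sumr.
by under eq_bigr => i _ do rewrite (eq_sym i); rewrite sum_delta.
Qed.

Lemma claim2 i0 j e3 : j != i0 -> g i0 e3 != 0 -> exists sel m e, X i0 j sel m e != 0.
Proof.
move=> hji g3.
have [e0] := NV_mul PF_F1 (PF_g i0) NV_F1 (ex_intro _ e3 g3).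
rewrite mulf_eq0 negb_or => /andP [hF1 hg0].
apply: NNPP => NX.
have H : forall sel m e, X i0 j sel m e = 0.
  move=> sel m e; apply/eqP; apply: contraT => hne; exfalso; apply: NX; by exists sel, m, e.
set a0 := e0 (inord 0); set b0 := e0 (inord 1).
set p0 := P e0.
have hp0 : p0 = a0 *: u + b0 *: v by [].
set lam := g j e0 / g i0 e0.
set cD : 'I_d -> k := fun i => (i == j)%:R - lam * (i == i0)%:R.
set D := qV B cD.
have hD : D \is 2.-homog by apply: qV_homog.
have dvD : forall m x, ev (D^`M(m)) x = ev ((B j)^`M(m)) x - lam * ev ((B i0)^`M(m)) x.
  by move=> m x; rewrite /D qV_dv sum_delta2.
have step1 : forall m, ev (D^`M(m)) p0 = 0.
  move=> m; rewrite dvD; apply: (mulfI hg0); rewrite mulr0.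
  have := H true m e0; rewrite /X /= -/p0 => E.
  by rewrite mulrBr /lam mulrA [g i0 e0 * (_ / _)]mulrC divfK.
have hPe : forall t, P (mk4 a0 b0 1 t) = p0 by move=> t; rewrite P_mk4.
have betaD : forall y, beta D p0 y = 0.
  move=> y; rewrite /beta big1 // => l _; by rewrite step1 mul0r.
have step2 : forall t, g j (mk4 a0 b0 1 t) = lam * g i0 (mk4 a0 b0 1 t).
  move=> t; apply/eqP; rewrite -subr_eq0; apply/eqP.
  rewrite /g hPe -(sum_delta2 j i0 lam (fun i => beta (B i) p0 (Qe (mk4 a0 b0 1 t)))).
  by rewrite -qV_beta -/D betaD.
have step3 : forall m t, g i0 (mk4 a0 b0 1 t) * ev (D^`M(m)) (rnc_pt w 1 t) = 0.
  move=> m t; have := H false m (mk4 a0 b0 1 t); rewrite /X /= Qe_mk4 step2 => E.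
  by rewrite dvD mulrBr -E mulrA [g i0 _ * lam]mulrC.
have step4 : forall m i, ev (D^`M(m)) (w i) = 0.
  move=> m.
  have [] := @poly0_mul _ r (fun i => beta (B i0) p0 (w i)) (fun i => ev (D^`M(m)) (w i)).
  - move=> t; rewrite -beta_sum_r -dv_sum // -rnc1.
    by rewrite -(step3 m t) /g hPe Qe_mk4.
  - move=> ha; exfalso; move/negP: hg0; apply; apply/eqP.
    rewrite /g /Qe /q_of /rnc_pt -/p0 beta_sum_r big1 // => i _.
    by rewrite ha mulr0.
  - by [].
have step5 : forall m l, (D^`M(m))@_U_(l) = 0.
  move=> m; apply: (@LA k r W h p0 (fun l => (D^`M(m))@_U_(l)) hw Wh (F1_P hF1)).
    move=> i; rewrite -[RHS](step4 m i) dv_lin //; apply: eq_bigr => l _.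
    by rewrite mxE.
  by rewrite -[RHS](step1 m) dv_lin.
have D0 : D = 0 by apply: U7.
have := hBfree D0 j; rewrite /cD eqxx (negbTE hji) mulr0 subr0 => /eqP.
by rewrite oner_eq0.
Qed.


Lemma sum_delta3 (j i0 : 'I_d) (al be : k) (F : 'I_d -> k) :
  \sum_i (al * (i == j)%:R - be * (i == i0)%:R) * F i = al * F j - be * F i0.
Proof.
under eq_bigr => i _ do rewrite mulrBl -!mulrA (eq_sym i) (eq_sym i i0).
by rewrite sumrB -!mulr_sumr !sum_delta.
Qed.

Lemma lin_mpoly (a : 'I_d -> k) : exists f : {mpoly k[d]}, forall c, f.@[c] = \sum_i a i * c i.
Proof.
exists (\sum_i a i *: 'X_i) => c; rewrite raddf_sum; apply: eq_bigr => i _.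
by transitivity (a i * (('X_i : {mpoly k[d]}).@[c])); [exact: mevalZ | rewrite mevalXU].
Qed.

Lemma PF_Z sel l : PF (fun e => Z sel e ord0 l).
Proof. by case: sel; [exact: PF_P | exact: PF_Qe]. Qed.

Lemma PF_X i0 j sel m : PF (X i0 j sel m).
Proof.
apply: PF_sub; apply: PF_mul; try exact: PF_g; apply: PF_ev; exact: PF_Z.
Qed.

Lemma Qe_neq0 e : e (inord 2) != 0 -> Qe e != 0.
Proof.
move=> hs; apply/negP => /eqP Q0.
have r0 : (0 < r)%N by apply: ltnW.
pose c := \row_(i < r) (e (inord 2) ^+ (r.-1 - i) * e (inord 3) ^+ i).
have : c *m W = 0 *m W.
  rewrite mul0mx -Q0 /Qe /q_of /rnc_pt mulmx_sum_row; apply: eq_bigr => i _.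
  by rewrite rowK mxE.
move/(row_free_inj hw)/matrixP/(_ 0 (Ordinal r0)); rewrite !mxE /= subn0 expr0 mulr1.
by move/eqP; rewrite expf_eq0 (negbTE hs) andbF.
Qed.

Definition concl e :=
    let p := p_of u v e in
    let q := q_of w e in
    \rank (col_mx p q) = 2%N /\
    generic_in (fun _ => True)
      (fun c : 'I_d -> k => ~ contains_line (qV B c) p q) /\
    generic_in (fun c : 'I_d -> k => contains_line (qV B c) p q)
      (fun c : 'I_d -> k => ~ sing_contains_line (qV B c) p q).

Lemma partii_X i0 j sel m e : j != i0 -> X i0 j sel m e != 0 ->
    generic_in (fun c : 'I_d -> k => contains_line (qV B c) (P e) (Qe e))
      (fun c : 'I_d -> k => ~ sing_contains_line (qV B c) (P e) (Qe e)).
Proof.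
move=> hji hX.
have [f hf] := lin_mpoly (fun i => ev ((B i)^`M(m)) (Z sel e)).
have hf' : forall c, f.@[c] = ev ((qV B c)^`M(m)) (Z sel e).
  by move=> c; rewrite hf qV_dv; apply: eq_bigr => i _; rewrite mulrC.
exists f; split.
  exists (fun i => g i0 e * (i == j)%:R - g j e * (i == i0)%:R); split.
    apply: CL1; first exact: qV_homog.
    - exact: Lvan.
    - exact: Rvan.
    by rewrite qV_beta sum_delta3 mulrC subrr.
  by rewrite hf' qV_dv sum_delta3.
move=> c _ _ hfc S; move/negP: hfc; apply; rewrite hf'; apply/eqP.
destruct sel; rewrite /Z.
  by have := S 1 0 m; rewrite scale1r scale0r addr0.
by have := S 0 1 m; rewrite scale1r scale0r add0r.
Qed.

Lemma partii_1 i0 e : (forall j, j = i0) -> g i0 e != 0 ->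
    generic_in (fun c : 'I_d -> k => contains_line (qV B c) (P e) (Qe e))
      (fun c : 'I_d -> k => ~ sing_contains_line (qV B c) (P e) (Qe e)).
Proof.
move=> hall hg; exists 1; split.
  exists (fun _ => 0); split; last by rewrite meval1 oner_neq0.
  by move=> a b; rewrite qV_ev big1 // => i _; rewrite mul0r.
move=> c hc [i hi] _ _.
have := CL2 (qV_homog c hB2) hc; rewrite qV_beta (bigD1 i0) //= big1.
  by rewrite addr0 => /eqP; rewrite mulf_eq0 (negbTE hg) orbF -(hall i) (negbTE hi).
by move=> i' /eqP; rewrite (hall i').
Qed.

Lemma parti i0 e : g i0 e != 0 ->
    generic_in (fun _ => True)
      (fun c : 'I_d -> k => ~ contains_line (qV B c) (P e) (Qe e)).
Proof.
move=> hg; have [f hf] := lin_mpoly (fun i => g i e).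
exists f; split.
  exists (fun i => (i == i0)%:R); split => //; rewrite hf.
  by under eq_bigr => i _ do rewrite mulrC eq_sym; rewrite sum_delta.
move=> c _ _ hfc hc; move/negP: hfc; apply; apply/eqP.
rewrite hf -[RHS](CL2 (qV_homog c hB2) hc) qV_beta; apply: eq_bigr => i _; by rewrite mulrC.
Qed.

Lemma final_sec : generic_in (fun _ => True) concl.
Proof.
have [i0 [e3 g3]] := claim1.
have [F4 [PF4 [NV4 H4]]] : exists F4 : ('I_4 -> k) -> k, PF F4 /\ (exists e, F4 e != 0) /\
   forall e, F4 e != 0 -> g i0 e != 0 ->
    generic_in (fun c : 'I_d -> k => contains_line (qV B c) (P e) (Qe e))
      (fun c : 'I_d -> k => ~ sing_contains_line (qV B c) (P e) (Qe e)).
  case: (boolP [exists j, j != i0]) => [/existsP [j hji] | hall].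
    have [sel [m [e4 hX]]] := claim2 hji g3.
    exists (X i0 j sel m); split; first exact: PF_X.
    split; first by exists e4.
    move=> e hXe _; exact: partii_X hXe.
  have hall' : forall j, j = i0.
    by move=> j; apply/eqP; move: hall; rewrite negb_exists => /forallP /(_ j); rewrite negbK.
  exists (fun _ => 1); split; first exact: PF_const.
  split; first by exists e3; rewrite oner_neq0.
  move=> e _ hg; exact: partii_1.
pose G e := F1 e * e (inord 2) * g i0 e * F4 e.
have PFG : PF G.
  apply: PF_mul => //; apply: PF_mul; last exact: PF_g.
  apply: PF_mul; [exact: PF_F1 | exact: PF_coord].
have [f hf] := PFG.
have NVG : exists e, G e != 0.
  apply: NV_mul => //.
    apply: PF_mul; last exact: PF_g.
    apply: PF_mul; [exact: PF_F1 | exact: PF_coord].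
  apply: NV_mul => //.
  - apply: PF_mul; [exact: PF_F1 | exact: PF_coord].
  - exact: PF_g.
  - apply: NV_mul => //; [exact: PF_F1 | exact: PF_coord | exact: NV_F1 |].
    by exists (mk4 0 0 1 0); rewrite /mk4 inordK // oner_neq0.
  - by exists e3.
exists f; split.
  by have [e he] := NVG; exists e; split => //; rewrite hf.
move=> e _ _; rewrite hf /G !mulf_eq0 !negb_or => /andP [/andP [/andP [hF1 hs] hg] hF4].
split; first exact: (rank2 (F1_P hF1) (QeH e) (Qe_neq0 hs)).
split; first exact: parti hg.
exact: H4.
Qed.

End Main.

Theorem lemma5p5 (k : closedFieldType) (char0 : [pchar k] =i pred0)
  (r : nat) (hr : (2 <= r)%N)
  (* the line L spanned by u, v *)
  (u v : 'rV[k]_(r.+1)) (hL : \rank (col_mx u v) = 2%N)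
  (* the hyperplane H = {h = 0}, transverse to L (L not contained in H) *)
  (h : 'rV[k]_(r.+1)) (hh : h != 0) (htr : ~~ (inH h u && inH h v))
  (* the rational normal curve R in H *)
  (w : 'I_r -> 'rV[k]_(r.+1)) (hw : row_free (\matrix_(i < r) w i))
  (hwH : forall i, inH h (w i))
  (* V = span of the basis B, a nonzero linear subspace of H^0(I_{L u R}(2)) *)
  (d : nat) (B : 'I_d -> {mpoly k[r.+1]}) (hd : (0 < d)%N)
  (hB2 : forall i, B i \is 2.-homog)
  (hBL : forall i, contains_line (B i) u v)
  (hBR : forall i (s t : k), ev (B i) (rnc_pt w s t) = 0)
  (hBfree : forall c : 'I_d -> k, qV B c = 0 -> forall i, c i = 0)
  (* (a) *)
  (ha : forall c : 'I_d -> k, (exists i, c i != 0) ->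
          ~ reducible_containing_H h (qV B c))
  (* (b) *)
  (hb : generic_in (fun _ => True)
          (fun c : 'I_d -> k => ~ sing_contains_line (qV B c) u v)) :
  generic_in (fun _ => True) (fun e : 'I_4 -> k =>
    let p := p_of u v e in
    let q := q_of w e in
    \rank (col_mx p q) = 2%N /\
    (* (i) *)
    generic_in (fun _ => True)
      (fun c : 'I_d -> k => ~ contains_line (qV B c) p q) /\
    (* (ii) *)
    generic_in (fun c : 'I_d -> k => contains_line (qV B c) p q)
      (fun c : 'I_d -> k => ~ sing_contains_line (qV B c) p q)).
Proof.
exact: (final_sec char0 hr htr hw hwH hd hB2 hBL hBR hBfree hb).
Qed.
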